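(* Let $K$ be a field. For every positive integer $N$ there exist an integer $d\ge 2$ and integers $t_1<t_2<\cdots<t_{2d+1}$ such that the toric ideal $I_A\subset K[x_1,\ldots,x_{2d+1}]$ of the cyclic configuration $A=\{{\bf a}_{t_1},\ldots,{\bf a}_{t_{2d+1}}\}$ (which has height $2$) satisfies $\mathrm{Split}(I_A)\ge N$ and $\mathrm{Split}_{\mathrm{rad}}(I_A)\ge N$.
   Context: For an integer $t$ and an integer $d\ge 2$, ${\bf a}_t=(1,t,t^2,\ldots,t^{2d-2})^T\in\mathbb{Z}^{2d-1}$. The cyclic configuration $A$ is the set of columns of the $(2d-1)\times(2d+1)$ Vandermonde matrix $({\bf a}_{t_1}\ {\bf a}_{t_2}\ \cdots\ {\bf a}_{t_{2d+1}})$ with $t_1<\cdots<t_{2d+1}$ integers. The toric ideal $I_A$ is the kernel of $K[x_1,\ldots,x_{2d+1}]\to K[s_1^{\pm1},\ldots,s_{2d-1}^{\pm1}]$, $x_i\mapsto{\bf s}^{{\bf a}_{t_i}}$. $\mathrm{Split}(I_A)$ is the smallest integer $s$ such that there exist toric ideals $I_{A_1},\ldots,I_{A_s}\subset K[x_1,\ldots,x_{2d+1}]$ with $I_A=I_{A_1}+\cdots+I_{A_s}$ and $I_{A_i}\ne I_A$ for all $i$; $\mathrm{Split}_{\mathrm{rad}}(I_A)$ is the smallest integer $r$ such that there exist toric ideals $I_{A_1},\ldots,I_{A_r}$ with $I_A=\mathrm{rad}(I_{A_1}+\cdots+I_{A_r})$ and $I_{A_i}\ne I_A$ for all $i$. 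*)

(* Defs.v *)
From HB Require Import structures.
From mathcomp Require Import all_boot all_order all_algebra.
From mathcomp Require Import mpoly.
Set Implicit Arguments. Unset Strict Implicit. Unset Printing Implicit Defensive.
Import Order.TTheory GRing.Theory Num.Theory.
Local Open Scope ring_scope.

Definition mexp_col (n : nat) (u : 'X_{1..n}) : 'cV[int]_n :=
  \col_(i < n) ((u i)%:Z).

(* Toric ideal I_A in K[x_1,...,x_n] of a configuration A (columns a_1..a_n
   in Z^m): the kernel of x_i |-> s^{a_i}.  The image of f = sum_u c_u x^u is
   sum_u c_u s^{A u}, which is zero iff for every b in Z^m the coefficients
   c_u with A u = b sum to zero. *)
Definition toric_ideal (K : fieldType) (m n : nat) (A : 'M[int]_(m, n))
  (f : {mpoly K[n]}) : Prop :=
  forall b : 'cV[int]_m,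
    \sum_(u <- msupp f | A *m mexp_col u == b) f@_u = 0.

Definition ideal_sum (K : fieldType) (n s : nat)
  (I : 'I_s -> {mpoly K[n]} -> Prop) (f : {mpoly K[n]}) : Prop :=
  exists g : 'I_s -> {mpoly K[n]}, (forall i, I i (g i)) /\ f = \sum_(i < s) g i.

Definition ideal_rad (K : fieldType) (n : nat) (J : {mpoly K[n]} -> Prop)
  (f : {mpoly K[n]}) : Prop :=
  exists k : nat, J (f ^+ k.+1).

Definition ideal_eq (K : fieldType) (n : nat) (I J : {mpoly K[n]} -> Prop) : Prop :=
  forall f, I f <-> J f.

Definition is_splitting (K : fieldType) (m n s : nat) (A : 'M[int]_(m, n))
  (ms : 'I_s -> nat) (As : forall i : 'I_s, 'M[int]_(ms i, n)) : Prop :=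
  ideal_eq (@toric_ideal K _ _ A) (ideal_sum (fun i => @toric_ideal K _ _ (As i))) /\
  forall i, ~ ideal_eq (@toric_ideal K _ _ (As i)) (@toric_ideal K _ _ A).

Definition is_rad_splitting (K : fieldType) (m n s : nat) (A : 'M[int]_(m, n))
  (ms : 'I_s -> nat) (As : forall i : 'I_s, 'M[int]_(ms i, n)) : Prop :=
  ideal_eq (@toric_ideal K _ _ A)
           (ideal_rad (ideal_sum (fun i => @toric_ideal K _ _ (As i)))) /\
  forall i, ~ ideal_eq (@toric_ideal K _ _ (As i)) (@toric_ideal K _ _ A).

Definition split_ge (K : fieldType) (m n : nat) (A : 'M[int]_(m, n)) (N : nat) : Prop :=
  forall s : nat, (s < N)%N ->
    ~ exists (ms : 'I_s -> nat) (As : forall i : 'I_s, 'M[int]_(ms i, n)),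
        @is_splitting K _ _ _ A ms As.

Definition split_rad_ge (K : fieldType) (m n : nat) (A : 'M[int]_(m, n)) (N : nat) : Prop :=
  forall s : nat, (s < N)%N ->
    ~ exists (ms : 'I_s -> nat) (As : forall i : 'I_s, 'M[int]_(ms i, n)),
        @is_rad_splitting K _ _ _ A ms As.

Definition cyclic_config (d : nat) (t : 'I_(d.*2.+1) -> int) :
  'M[int]_(d.*2.-1, d.*2.+1) :=
  \matrix_(i < d.*2.-1, j < d.*2.+1) (t j) ^+ i.

(* Main.v *)
Require Import Defs.
From HB Require Import structures.
From mathcomp Require Import all_boot all_order all_algebra.
From mathcomp Require Import mpoly.
Import Order.TTheory GRing.Theory Num.Theory.
Local Open Scope ring_scope.
From mathcomp Require Import ring lra zify.
Set Implicit Arguments. Unset Strict Implicit. Unset Printing Implicit Defensive.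

Lemma pascal_sum (n : nat) (a : nat -> int) :
  \sum_(j < n.+2) ('C(n.+1, j))%:R * a j =
  \sum_(j < n.+1) ('C(n, j))%:R * (a j + a j.+1).
Proof.
rewrite big_ord_recl /= bin0.
under eq_bigr do rewrite /bump /= add1n binS natrD mulrDl.
rewrite big_split /=.
under [X in _ = X]eq_bigr do rewrite mulrDr.
rewrite [X in _ = X]big_split /= addrC.
have -> : \sum_(i < n.+1) ('C(n, i.+1))%:R * a i.+1 = \sum_(i < n) ('C(n, i.+1))%:R * a i.+1.
  by rewrite big_ord_recr /= bin_small // mul0r addr0.
have -> : \sum_(i < n.+1) ('C(n, i))%:R * a i = a 0%N + \sum_(i < n) ('C(n, i.+1))%:R * a i.+1.
  by rewrite big_ord_recl /= bin0 mul1r.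
by rewrite mul1r [X in _ + X]addrC addrA.
Qed.

Lemma binom_alt (n m : nat) : (m < n)%N ->
  \sum_(j < n.+1) ((-1) ^+ j * ('C(n, j))%:R * (j%:R) ^+ m : int) = 0.
Proof.
elim: n m => [//|n IH] m Hm.
have -> : \sum_(j < n.+2) ((-1) ^+ j * ('C(n.+1, j))%:R * (j%:R) ^+ m : int)
  = \sum_(j < n.+2) ('C(n.+1, j))%:R * ((-1) ^+ j * (j%:R) ^+ m : int).
  apply: eq_bigr => j _.
  ring.
rewrite (pascal_sum n (fun j => (-1)^+j * (j%:R)^+m : int)).
have -> : \sum_(j < n.+1) ('C(n, j))%:R *
   ((-1) ^+ j * (j%:R) ^+ m + (-1) ^+ j.+1 * (j.+1%:R) ^+ m : int)
  = - \sum_(i < m) ('C(m, i))%:R * \sum_(j < n.+1) ((-1) ^+ j * ('C(n, j))%:R * (j%:R) ^+ i : int).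
  under [X in _ = - X]eq_bigr do rewrite mulr_sumr.
  rewrite (exchange_big_dep xpredT) //= -sumrN.
  apply: eq_bigr => j _.
  rewrite -[(j.+1)%:R]natr1 exprD1n big_ord_recr /=.
  rewrite binn mulr1n.
  have -> : \sum_(i < m) (j%:R) ^+ i *+ 'C(m, i) = \sum_(i < m) ('C(m, i))%:R * (j%:R ^+ i : int).
    by apply: eq_bigr => i _; rewrite mulr_natl.
  rewrite -sumrN.
  set S := \sum_(i < m) _.
  have -> : \sum_(i < m) - ('C(m, i)%:R * ((-1) ^+ j * 'C(n, j)%:R * j%:R ^+ i)) = 'C(n, j)%:R * (-1) ^+ j.+1 * S.
    rewrite /S mulr_sumr; apply: eq_bigr => i _; rewrite exprS; ring.
  rewrite exprS; ring.
rewrite big1 ?oppr0 // => i _.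
by rewrite IH ?mulr0 // (leq_trans (ltn_ord i)).
Qed.

Definition kerA (d : nat) (x : 'I_(d.*2.+1) -> int) :=
  forall i : nat, (i < d.*2.-1)%N -> \sum_(j < d.*2.+1) (j%:Z) ^+ i * x j = 0.

Lemma kerpoly d (x : 'I_(d.*2.+1) -> int) : kerA x ->
  forall p : {poly int}, (size p <= d.*2.-1)%N -> \sum_j x j * p.[j%:Z] = 0.
Proof.
move=> hx p hp.
under eq_bigr do rewrite horner_coef mulr_sumr.
rewrite exchange_big /= big1 // => i _.
have -> : \sum_(j < d.*2.+1) x j * (p`_i * (j%:Z) ^+ i) = p`_i * \sum_(j < d.*2.+1) (j%:Z) ^+ i * x j.
  by rewrite mulr_sumr; apply: eq_bigr => j _; ring.
by rewrite hx ?mulr0 // (leq_trans (ltn_ord i)).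
Qed.

Lemma vanish d (y : 'I_(d.*2.+1) -> int) : kerA y ->
  (forall j : 'I_(d.*2.+1), (d.*2.-1 <= j)%N -> y j = 0) -> forall j, y j = 0.
Proof.
move=> hy hbig k.
case: (leqP d.*2.-1 k) => hk; first exact: hbig.
pose r := rem (k : nat) (iota 0 d.*2.-1).
pose p : {poly int} := \prod_(l <- r) ('X - (l%:Z)%:P).
have kin : (k : nat) \in iota 0 d.*2.-1 by rewrite mem_iota.
have memr l : (l \in r) = (l != k) && (l < d.*2.-1)%N.
  by rewrite /r mem_rem_uniq ?iota_uniq // inE mem_iota.
have sp : (size p <= d.*2.-1)%N.
  by rewrite size_prod_XsubC size_rem // size_iota; case: (d.*2.-1) hk.
have pev (j : nat) : p.[j%:Z] = \prod_(l <- r) (j%:Z - l%:Z).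
  by rewrite horner_prod; apply: eq_bigr => l _; rewrite hornerXsubC.
have := kerpoly hy sp.
rewrite (bigD1 k) //= big1 ?addr0.
  move/eqP; rewrite mulf_eq0 => /orP [/eqP //|].
  rewrite pev prodf_seq_eq0 => /hasP [l]; rewrite memr => /andP [lk _] /eqP.
  by move/eqP; rewrite subr_eq0 => /eqP [] /esym/eqP; rewrite (negbTE lk).
move=> j jk.
case: (leqP d.*2.-1 j) => hj; first by rewrite hbig ?mul0r.
rewrite pev; apply/eqP; rewrite mulf_eq0; apply/orP; right.
rewrite prodf_seq_eq0; apply/hasP; exists (j : nat); last by rewrite subrr.
by rewrite memr hj andbT.
Qed.

Definition E (d j : nat) : int := (-1) ^+ j * ('C(d.*2, j))%:R.

Lemma kerE1 d : kerA (fun j : 'I_(d.*2.+1) => E d j).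
Proof.
move=> i hi; rewrite -[RHS](@binom_alt d.*2 i); last by case: (d.*2) hi => //= n; lia.
by apply: eq_bigr => j _; rewrite /E -natz mulrC.
Qed.

Lemma kerE2 d : kerA (fun j : 'I_(d.*2.+1) => E d j * j%:Z).
Proof.
move=> i hi; rewrite -[RHS](@binom_alt d.*2 i.+1); last by case: (d.*2) hi => //= n; lia.
by apply: eq_bigr => j _; rewrite /E -natz exprS; ring.
Qed.

Lemma kerA_lin d (x y : 'I_(d.*2.+1) -> int) a b : kerA x -> kerA y ->
  kerA (fun j => a * x j + b * y j).
Proof.
move=> hx hy i hi.
under eq_bigr do rewrite mulrDr mulrCA [_ * (b * _)]mulrCA.
by rewrite big_split /= -!mulr_sumr hx // hy // !mulr0 addr0.
Qed.

Lemma E_top d : E d d.*2 = 1.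
Proof. by rewrite /E binn -signr_odd odd_double expr0 mul1r. Qed.

Lemma E_top1 d : (0 < d)%N -> E d d.*2.-1 = - (d.*2)%:Z.
Proof.
move=> hd; rewrite /E -signr_odd.
have -> : odd d.*2.-1 by case: d hd => // d' _; rewrite doubleS /= odd_double.
have -> : d.*2.-1 = (d.*2 - 1)%N by rewrite subn1.
by rewrite bin_sub ?bin1 ?expr1 ?mulN1r ?natz //; case: d hd.
Qed.

Lemma param d (x : 'I_(d.*2.+1) -> int) : (0 < d)%N -> kerA x ->
  exists a b : int, forall j : 'I_(d.*2.+1), (d.*2)%:Z * x j = E d j * (a + b * j%:Z).
Proof.
move=> hd hx.
pose x1 := x (inord d.*2.-1); pose x2 := x ord_max.
pose b := (d.*2)%:Z * x2 + x1; pose a := - x1 - ((d.*2)%:Z - 1) * b.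
exists a, b.
pose y := fun j : 'I_(d.*2.+1) => (d.*2)%:Z * x j + (- a) * E d j + (- b) * (E d j * j%:Z).
have ky : kerA y.
  have h := kerA_lin 1 (-b) (kerA_lin (d.*2)%:Z (-a) hx (@kerE1 d)) (@kerE2 d).
  move=> i hi; rewrite -[RHS](h i hi); apply: eq_bigr => j _; rewrite /y; ring.
have y0 := vanish ky.
move=> j; apply/eqP; rewrite -subr_eq0; apply/eqP.
rewrite -[RHS](y0 _ j); first by rewrite /y; ring.
move=> k hk.
have h1 : (d.*2.-1 < d.*2.+1)%N by case: (d.*2).
have [->|hk2] : k = inord d.*2.-1 \/ k = ord_max.
  have hk1 : (d * 2 - 1 <= k)%N by rewrite muln2 subn1.
  have hk2 : (k < d * 2 + 1)%N by rewrite muln2 addn1.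
  case: (ltnP k (d * 2)) => hh.
    left; apply: val_inj; rewrite /= inordK //.
    have e : (k : nat) = (d * 2 - 1)%N by lia.
    by rewrite e muln2 subn1.
  right; apply: val_inj => /=.
  have e : (k : nat) = (d * 2)%N by lia.
  by rewrite e muln2.
  rewrite /y inordK // E_top1 //.
  have hd2 : (0 < d.*2)%N by rewrite double_gt0.
  have -> : ((d.*2.-1)%:Z) = (d.*2)%:Z - 1 by rewrite -[in RHS](prednK hd2) -addn1 PoszD addrK.
  rewrite /a /b /x1; ring.
rewrite hk2 /y /= E_top /a /b /x2 /x1; ring.
Qed.

Section MP.
Variables (K : fieldType) (n : nat).
Implicit Types (p h g : {mpoly K[n]}).

Lemma sum_msupp_sub p (r : seq 'X_{1..n}) (P : pred 'X_{1..n}) :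
  uniq r -> {subset msupp p <= r} ->
  \sum_(u <- msupp p | P u) p@_u = \sum_(u <- r | P u) p@_u.
Proof.
move=> ur sub.
rewrite [RHS](bigID (fun u => u \in msupp p)) /=.
rewrite [X in _ = _ + X]big1 ?addr0; last first.
  by move=> u /andP [_]; rewrite -mcoeff_eq0 => /eqP.
rewrite -big_filter -[RHS]big_filter.
apply: perm_big; apply: uniq_perm; rewrite ?filter_uniq ?msupp_uniq //.
move=> u; rewrite !mem_filter /=.
by case: (boolP (u \in msupp p)) => h; rewrite ?andbF ?andbT //= (sub _ h) andbT.
Qed.

Lemma toric0 m (B : 'M[int]_(m, n)) : toric_ideal B (0 : {mpoly K[n]}).
Proof. by move=> b; rewrite msupp0 big_nil. Qed.

Lemma toric_binom m (B : 'M[int]_(m, n)) (a b : 'X_{1..n}) :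
  B *m mexp_col a = B *m mexp_col b -> toric_ideal B ('X_[a] - 'X_[b] : {mpoly K[n]}).
Proof.
move=> eab b0.
case: (eqVneq a b) => [->|nab]; first by rewrite subrr msupp0 big_nil.
rewrite (@sum_msupp_sub _ [:: a; b]) /=; first last.
- move=> u; rewrite mcoeff_msupp !inE; apply: contraR; rewrite negb_or => /andP [h1 h2].
  by rewrite mcoeffB !mcoeffX [a == u]eq_sym [b == u]eq_sym (negbTE h1) (negbTE h2) subrr.
- by rewrite inE nab.
rewrite !big_cons big_nil eab; case: (_ == _) => //.
by rewrite !mcoeffB !mcoeffX !eqxx eq_sym (negbTE nab) addr0; ring.
Qed.

Lemma toric_binom_inv m (B : 'M[int]_(m, n)) (a b : 'X_{1..n}) :
  toric_ideal B ('X_[a] - 'X_[b] : {mpoly K[n]}) -> B *m mexp_col a = B *m mexp_col b.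
Proof.
move=> tb.
case: (eqVneq a b) => [->//|nab].
have := tb (B *m mexp_col a).
rewrite (@sum_msupp_sub _ [:: a; b]) /=; first last.
- move=> u; rewrite mcoeff_msupp !inE; apply: contraR; rewrite negb_or => /andP [h1 h2].
  by rewrite mcoeffB !mcoeffX [a == u]eq_sym [b == u]eq_sym (negbTE h1) (negbTE h2) subrr.
- by rewrite inE nab.
rewrite !big_cons big_nil eqxx !mcoeffB !mcoeffX !eqxx eq_sym (negbTE nab).
case: eqP => [->//|_]; rewrite subr0 addr0 => /eqP; by rewrite oner_eq0.
Qed.

Lemma class_sum (T : eqType) (key : 'X_{1..n} -> T) (r : seq 'X_{1..n}) (F : 'X_{1..n} -> K)
  (P : pred 'X_{1..n}) :
  (forall b, \sum_(u <- r | key u == b) F u = 0) ->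
  (forall u u', u \in r -> u' \in r -> key u = key u' -> P u = P u') ->
  \sum_(u <- r | P u) F u = 0.
Proof.
move=> hs hc.
pose B := undup [seq key u | u <- r & P u].
have -> : \sum_(u <- r | P u) F u = \sum_(b <- B) \sum_(u <- r | key u == b) F u.
  under [RHS]eq_bigr do rewrite big_mkcond.
  rewrite exchange_big /= big_mkcond /= big_seq_cond [RHS]big_seq_cond.
  apply: eq_bigr => u /andP [ur _].
  rewrite -big_mkcond /= big_const_seq.
  have -> : count (fun b => key u == b) B = (P u : nat).
    have -> : count (fun b => key u == b) B = count_mem (key u) B.
      by apply: eq_count => b; rewrite eq_sym.
    rewrite count_uniq_mem ?undup_uniq // mem_undup; congr (nat_of_bool _).
    case: (boolP (P u)) => Pu.
      by apply/mapP; exists u => //; rewrite mem_filter Pu.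
    apply/negbTE/negP => /mapP [u' u'r ek]; move: u'r; rewrite mem_filter => /andP [Pu' u'r].
    by move: Pu; rewrite (hc u u') ?Pu'.
  by case: (P u) => //=; rewrite addr0.
by rewrite big1 // => b _; apply: hs.
Qed.

Lemma bad_pair m (B : 'M[int]_(m, n)) h (P : pred 'X_{1..n}) :
  toric_ideal B h -> \sum_(u <- msupp h | P u) h@_u != 0 ->
  exists u u', [/\ u \in msupp h, u' \in msupp h,
    B *m mexp_col u = B *m mexp_col u', P u & ~~ P u'].
Proof.
move=> th nz.
case: (boolP (has (fun u => has (fun u' => (B *m mexp_col u == B *m mexp_col u') && P u && ~~ P u') (msupp h)) (msupp h))).
  move=> /hasP [u ur /hasP [u' u'r /andP [/andP [/eqP e pu] npu']]].
  by exists u, u'.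
move=> /hasPn hn; exfalso; move/eqP: nz; apply.
apply: class_sum th _ => u u' ur u'r e.
case: (boolP (P u)) => pu; case: (boolP (P u')) => pu' //.
  by have := hn u ur => /hasPn /(_ u' u'r); rewrite e eqxx pu pu'.
by have := hn u' u'r => /hasPn /(_ u ur); rewrite e eqxx pu pu'.
Qed.

End MP.

Section Eval.
Variables (K : fieldType) (n : nat) (k k1 : 'I_n).
Definition zpt : 'I_n -> K := fun j => if (j == k) || (j == k1) then 0 else 1.
Definition inT (u : 'X_{1..n}) : bool := (u k == 0%N) && (u k1 == 0%N).

Lemma prod_z (u : 'X_{1..n}) : \prod_i zpt i ^+ u i = (inT u)%:R.
Proof.
case: (boolP (inT u)) => h.
  rewrite big1 // => i _; rewrite /zpt; case: ifP => hi; last by rewrite expr1n.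
  case/andP: h => /eqP h1 /eqP h2.
  by case/orP: hi => /eqP ->; rewrite ?h1 ?h2 expr0.
apply/eqP; apply/prodf_eq0.
move: h; rewrite /inT negb_and => /orP [] h; [exists k | exists k1] => //;
  by rewrite /zpt eqxx ?orbT expr0n (negbTE h).
Qed.

Lemma meval_z (p : {mpoly K[n]}) : p.@[zpt] = \sum_(u <- msupp p | inT u) p@_u.
Proof.
rewrite mevalE [RHS]big_mkcond /=; apply: eq_bigr => u _.
by rewrite prod_z; case: (inT u); rewrite ?mulr1 ?mulr0.
Qed.
End Eval.

Lemma mx_ker d (x : 'cV[int]_(d.*2.+1)) :
  cyclic_config (fun j : 'I_(d.*2.+1) => (j : nat)%:Z) *m x = 0 <-> kerA (fun j => x j ord0).
Proof.
split.
  move=> h i hi; have := congr1 (fun M : 'cV[int]_(d.*2.-1) => M (Ordinal hi) ord0) h.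
  by rewrite !mxE => e; rewrite -[RHS]e; apply: eq_bigr => j _; rewrite !mxE.
move=> h; apply/matrixP => i j0; rewrite ord1 !mxE -[RHS](h i (ltn_ord i)).
by apply: eq_bigr => j _; rewrite !mxE.
Qed.

Lemma arith_sign (D c1 c2 vk vk1 a b k : int) : 0 < D -> 0 < c1 -> 0 < c2 ->
  D * vk = - c1 * (a + b * k) -> D * vk1 = c2 * (a + b * (k + 1)) ->
  0 <= vk -> 0 <= vk1 -> (vk != 0) || (vk1 != 0) ->
  [/\ 0 < b, a + b * k <= 0 & 0 <= a + b * (k + 1)].
Proof.
move=> hD h1 h2 e1 e2 p1 p2 nz.
have hp : a + b * k <= 0.
  have : 0 <= c1 * - (a + b * k) by rewrite mulrN -mulNr -e1 mulr_ge0 // ltW.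
  by rewrite pmulr_rge0 // oppr_ge0.
have hq : 0 <= a + b * (k + 1).
  have : 0 <= c2 * (a + b * (k + 1)) by rewrite -e2 mulr_ge0 // ltW.
  by rewrite pmulr_rge0.
split => //.
rewrite lt_neqAle; apply/andP; split; last by move: hp hq; rewrite mulrDr mulr1; lia.
apply/eqP => b0; move: e1 e2 hp hq nz; rewrite -b0 !mul0r !addr0 => e1 e2 hp hq.
have a0 : a = 0 by apply/eqP; rewrite eq_le hp hq.
move: e1 e2; rewrite a0 !mulr0 => /eqP; rewrite mulf_eq0 gt_eqF //= => /eqP ->.
by move/eqP; rewrite mulf_eq0 gt_eqF //= => /eqP ->; rewrite eqxx.
Qed.

Lemma det_pos (a b a' b' k k' : int) : 0 < b -> a + b * k <= 0 -> 0 <= a + b * (k + 1) ->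
  0 < b' -> a' + b' * k' <= 0 -> 0 <= a' + b' * (k' + 1) -> k + 2 <= k' ->
  0 < a * b' - a' * b.
Proof.
move=> hb h1 h2 hb' h3 h4 hk.
have e1 : - b * (k + 1) * b' <= a * b' by rewrite ler_pM2r //; lia.
have e2 : b' * k' * b <= - a' * b by rewrite ler_pM2r //; lia.
have e3 : b * b' <= b * b' * (k' - k - 1).
  have hX : 0 <= b * b' by rewrite mulr_ge0 // ltW.
  by rewrite ler_peMr //; lia.
have : 0 < b * b' by rewrite mulr_gt0.
move: e1 e2 e3; set X := b * b'; lia.
Qed.

Lemma toric_eq_dir (K : fieldType) n m1 m2 (B1 : 'M[int]_(m1, n)) (B2 : 'M[int]_(m2, n)) :
  (forall u u', B1 *m mexp_col u = B1 *m mexp_col u' <-> B2 *m mexp_col u = B2 *m mexp_col u') ->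
  forall f : {mpoly K[n]}, toric_ideal B1 f -> toric_ideal B2 f.
Proof.
move=> hk f h b.
case: (boolP (has (fun u => B2 *m mexp_col u == b) (msupp f))).
  move=> /hasP [u0 _ /eqP <-].
  rewrite -[RHS](h (B1 *m mexp_col u0)); apply: eq_bigl => u.
  by apply/eqP/eqP => /hk.
move=> /hasPn hn.
rewrite big_seq_cond big1 // => u /andP [uin hu].
by move: (hn u uin); rewrite hu.
Qed.

Lemma toric_eq (K : fieldType) n m1 m2 (B1 : 'M[int]_(m1, n)) (B2 : 'M[int]_(m2, n)) :
  (forall u u', B1 *m mexp_col u = B1 *m mexp_col u' <-> B2 *m mexp_col u = B2 *m mexp_col u') ->
  ideal_eq (@toric_ideal K _ _ B1) (@toric_ideal K _ _ B2).
Proof.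
move=> hk f; split; first exact: toric_eq_dir.
by apply: toric_eq_dir => u u'; split => /hk.
Qed.

Lemma span_ker d r (B : 'M[int]_(r, d.*2.+1)) (v v' x : 'cV[int]_(d.*2.+1)) a b a' b' ax bx :
  (0 < d)%N ->
  (forall j : 'I_(d.*2.+1), (d.*2)%:Z * v j ord0 = E d j * (a + b * j%:Z)) ->
  (forall j : 'I_(d.*2.+1), (d.*2)%:Z * v' j ord0 = E d j * (a' + b' * j%:Z)) ->
  (forall j : 'I_(d.*2.+1), (d.*2)%:Z * x j ord0 = E d j * (ax + bx * j%:Z)) ->
  B *m v = 0 -> B *m v' = 0 -> a * b' - a' * b != 0 -> B *m x = 0.
Proof.
move=> hd hv hv' hx Bv Bv' hD.
set Dt := a * b' - a' * b.
have ex j : Dt * x j ord0 = (ax * b' - a' * bx) * v j ord0 + (a * bx - ax * b) * v' j ord0.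
  apply/eqP; rewrite -subr_eq0; apply/eqP.
  have : (d.*2)%:Z * (Dt * x j ord0 - ((ax * b' - a' * bx) * v j ord0 + (a * bx - ax * b) * v' j ord0)) = 0.
    have -> : (d.*2)%:Z * (Dt * x j ord0 - ((ax * b' - a' * bx) * v j ord0 + (a * bx - ax * b) * v' j ord0))
      = Dt * ((d.*2)%:Z * x j ord0) - (ax * b' - a' * bx) * ((d.*2)%:Z * v j ord0) - (a * bx - ax * b) * ((d.*2)%:Z * v' j ord0) by ring.
    by rewrite hx hv hv' /Dt; ring.
  move/eqP; rewrite mulf_eq0 => /orP [|/eqP //].
  by move=> /eqP [] /eqP; rewrite double_eq0 => /eqP hd0; rewrite hd0 in hd.
apply/matrixP => i c; rewrite ord1 mxE [RHS]mxE.
apply/eqP; rewrite -(mulrI_eq0 _ (lregP hD)).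
have := congr1 (fun M : 'cV[int]_r => M i ord0) Bv; rewrite !mxE => e1.
have := congr1 (fun M : 'cV[int]_r => M i ord0) Bv'; rewrite !mxE => e2.
rewrite mulr_sumr.
under eq_bigr do rewrite mulrCA ex mulrDr.
rewrite big_split /=.
under eq_bigr do rewrite mulrCA.
under [X in _ + X]eq_bigr do rewrite mulrCA.
by rewrite -!mulr_sumr e1 e2 !mulr0 addr0.
Qed.

Definition tt0 (d : nat) : 'I_(d.*2.+1) -> int := fun j => (j : nat)%:Z.

Lemma mexp_colE n (u : 'X_{1..n}) j : mexp_col u j ord0 = (u j)%:Z.
Proof. by rewrite mxE. Qed.

Section Core.
Variables (K : fieldType) (d s : nat) (ms : 'I_s -> nat).
Variable (As : forall i : 'I_s, 'M[int]_(ms i, d.*2.+1)).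
Local Notation n := d.*2.+1.
Local Notation A := (cyclic_config (@tt0 d)).
Hypothesis hd : (0 < d)%N.
Hypothesis H1 : forall i (h : {mpoly K[n]}), toric_ideal (As i) h -> toric_ideal A h.
Hypothesis H2 : forall g : {mpoly K[n]}, toric_ideal A g ->
  exists e, ideal_sum (fun i => @toric_ideal K _ _ (As i)) (g ^+ e.+1).
Hypothesis H3 : forall i, ~ ideal_eq (@toric_ideal K _ _ (As i)) (@toric_ideal K _ _ A).

Lemma LiL i (u u' : 'X_{1..n}) :
  As i *m mexp_col u = As i *m mexp_col u' -> A *m mexp_col u = A *m mexp_col u'.
Proof. by move=> e; have := @toric_binom K _ _ (As i) u u' e; move/H1; apply: toric_binom_inv. Qed.

Definition Rel (m : nat) (i : 'I_s) : Prop :=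
  exists v : 'cV[int]_n, [/\ A *m v = 0, As i *m v = 0 &
    exists a b : int, (forall j : 'I_n, (d.*2)%:Z * v j ord0 = E d j * (a + b * j%:Z)) /\
      [/\ 0 < b, a + b * (2 * m + 1)%N%:Z <= 0 & 0 <= a + b * ((2 * m + 1)%N%:Z + 1)]].

Lemma Rel_inj m m' i : (m < m')%N -> Rel m i -> Rel m' i -> False.
Proof.
move=> hm [v [Av Bv [a [b [pv [hb h1 h2]]]]]] [v' [Av' Bv' [a' [b' [pv' [hb' h1' h2']]]]]].
suff hk : forall u u', As i *m mexp_col u = As i *m mexp_col u' <-> A *m mexp_col u = A *m mexp_col u'.
  move: (@toric_eq K _ _ _ _ _ hk); exact: H3.
move=> u u'; split; first exact: LiL.
move=> e; apply/eqP; rewrite -subr_eq0 -mulmxBr; apply/eqP.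
have : A *m (mexp_col u - mexp_col u') = 0 by rewrite mulmxBr e subrr.
move/mx_ker => /(param hd) [ax [bx px]].
apply: (span_ker hd pv pv' px Bv Bv').
rewrite gt_eqF //; apply: (det_pos hb h1 h2 hb' h1' h2').
have : (2 * m + 1 + 2 <= 2 * m' + 1)%N by lia.
by rewrite -lez_nat PoszD.
Qed.


Lemma odd_k (m : nat) : odd (2 * m + 1).
Proof. by rewrite addn1 /= oddM. Qed.

Lemma E_odd (m : nat) : (2 * m + 1 <= d.*2)%N -> E d (2 * m + 1) = - ('C(d.*2, 2 * m + 1))%:Z.
Proof. by move=> _; rewrite /E -signr_odd odd_k expr1 mulN1r natz. Qed.

Lemma E_even (m : nat) : E d (2 * m + 1).+1 = ('C(d.*2, (2 * m + 1).+1))%:Z.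
Proof. by rewrite /E -signr_odd /= odd_k /= expr0 mul1r natz. Qed.

Lemma Rel_ex (m : 'I_d) : exists i, Rel m i.
Proof.
set k := (2 * m + 1)%N.
have hkd : (k.+1 <= d.*2)%N by rewrite /k -muln2; have := ltn_ord m; lia.
have hk : (k < n)%N by lia.
have hk1 : (k.+1 < n)%N by lia.
pose kk : 'I_n := inord k; pose kk1 : 'I_n := inord k.+1.
have kkE : (kk : nat) = k by rewrite inordK.
have kk1E : (kk1 : nat) = k.+1 by rewrite inordK.
pose wf := fun j : 'I_n => 2 * (E d j * j%:Z) + (- (2 * k + 1)%N%:Z) * E d j.
have kw : kerA wf by apply: kerA_lin; [apply: kerE2 | apply: kerE1].
have c1p : (0 < 'C(d.*2, k))%N by rewrite bin_gt0; lia.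
have c2p : (0 < 'C(d.*2, k.+1))%N by rewrite bin_gt0.
have wk : wf kk = ('C(d.*2, k))%:Z.
  rewrite /wf kkE E_odd; last by lia.
  rewrite /k !PoszD; ring.
have wk1 : wf kk1 = ('C(d.*2, k.+1))%:Z.
  rewrite /wf kk1E E_even /k -addn1 !PoszD; ring.
pose pa : 'X_{1..n} := [multinom (if (0 <= wf j)%R then `|wf j|%N else 0%N) | j < n].
pose nb : 'X_{1..n} := [multinom (if (wf j < 0)%R then `|wf j|%N else 0%N) | j < n].
have colw : mexp_col pa - mexp_col nb = \col_j wf j.
  apply/matrixP => j c; rewrite ord1 !mxE !mnmE.
  have [h|h] := leP 0 (wf j).
    by rewrite subr0 abszE ger0_norm.
  by rewrite sub0r abszE ltr0_norm // opprK.
have Aw : A *m (\col_j wf j) = 0.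
  by apply/mx_ker => i hi; under eq_bigr do rewrite mxE; exact: kw.
have eAB : A *m mexp_col pa = A *m mexp_col nb.
  by apply/eqP; rewrite -subr_eq0 -mulmxBr colw Aw.
pose g : {mpoly K[n]} := 'X_[pa] - 'X_[nb].
have tg : toric_ideal A g := @toric_binom K _ _ A pa nb eAB.
have ga : inT kk kk1 pa = false.
  by rewrite /inT !mnmE wk le0z_nat absz_nat (gtn_eqF c1p).
have gb : inT kk kk1 nb.
  by rewrite /inT !mnmE wk wk1 !ltNge !le0z_nat.
have gz : g.@[@zpt K _ kk kk1] = -1 by rewrite mevalB !mevalX !prod_z ga gb sub0r.
have [e [hs [ths hsum]]] := H2 tg.
have hz : (g ^+ e.+1).@[@zpt K _ kk kk1] = \sum_i (hs i).@[@zpt K _ kk kk1] by rewrite hsum raddf_sum.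
have gX : (g ^+ e.+1).@[@zpt K _ kk kk1] = (g.@[@zpt K _ kk kk1]) ^+ e.+1 by exact: rmorphXn.
rewrite gX gz in hz.
case: (boolP [exists i, (hs i).@[@zpt K _ kk kk1] != 0]); last first.
  move/existsPn => hn; move: hz; rewrite big1 => [/eqP|i _]; last by apply/eqP; rewrite -[_ == _]negbK hn.
  by rewrite signr_eq0.
move/existsP => [i hi]; exists i.
rewrite meval_z in hi.
have [u [u' [uin u'in eu pu npu']]] := bad_pair (ths i) hi.
have eA := LiL eu.
pose v := mexp_col u' - mexp_col u.
have Av : A *m v = 0 by rewrite mulmxBr eA subrr.
have Bv : As i *m v = 0 by rewrite mulmxBr eu subrr.
have [a [b pv]] := param hd (proj1 (mx_ker v) Av).
exists v; split => //; exists a, b; split => //.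
move: pu npu'; rewrite /inT => /andP [/eqP uk /eqP uk1] npu'.
have vk : v kk ord0 = (u' kk)%:Z by rewrite !mxE uk subr0.
have vk1 : v kk1 ord0 = (u' kk1)%:Z by rewrite !mxE uk1 subr0.
have := pv kk; have := pv kk1.
rewrite vk vk1 kkE kk1E E_odd ?E_even; last by lia.
move=> e2 e1.
have [] := @arith_sign (d.*2)%:Z ('C(d.*2, k))%:Z ('C(d.*2, k.+1))%:Z (u' kk)%:Z (u' kk1)%:Z a b k%:Z.
- by rewrite ltz_nat double_gt0.
- by rewrite ltz_nat.
- by rewrite ltz_nat.
- by rewrite e1 mulNr.
- by rewrite e2 -addn1 PoszD.
- by [].
- by [].
- by move: npu'; rewrite negb_and -!eqz_nat.
by [].
Qed.

Lemma core : (d <= s)%N.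
Proof.
have [f hf] := fin_all_exists Rel_ex.
have inj : injective f.
  move=> m m' e; case: (ltngtP m m') => h.
  - by exfalso; apply: (Rel_inj h (hf m)); rewrite e; exact: hf.
  - by exfalso; apply: (Rel_inj h (hf m')); rewrite -e; exact: hf.
  - exact: val_inj.
by have := leq_card f inj; rewrite !card_ord.
Qed.

End Core.

Lemma sum_single (K : fieldType) n s (i : 'I_s) (h : {mpoly K[n]}) :
  \sum_(j < s) (if j == i then h else 0) = h.
Proof. by rewrite (bigD1 i) //= eqxx big1 ?addr0 // => j /negbTE ->. Qed.

Unset Implicit Arguments.

Theorem proposition4p9 (K : fieldType) (N : nat) (hN : (0 < N)%N) :
  exists (d : nat) (t : 'I_(d.*2.+1) -> int),
    [/\ (2 <= d)%N,
        (forall i j : 'I_(d.*2.+1), (i < j)%N -> t i < t j),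
        @split_ge K _ _ (cyclic_config t) N &
        @split_rad_ge K _ _ (cyclic_config t) N].
Proof.
exists N.+2, (@tt0 N.+2); split => //.
- move=> s hs [ms [As [heq hne]]].
  have : (N.+2 <= s)%N.
    apply: (@core K N.+2 s ms As) => //.
    + move=> i h th; apply/heq; exists (fun j => if j == i then h else 0); split.
        by move=> j; case: eqP => [->//|_]; exact: toric0.
      by rewrite sum_single.
    + by move=> g tg; exists 0%N; rewrite expr1; apply/heq.
  by move: hs; lia.
- move=> s hs [ms [As [heq hne]]].
  have : (N.+2 <= s)%N.
    apply: (@core K N.+2 s ms As) => //.
    + move=> i h th; apply/heq; exists 0%N; rewrite expr1.
      exists (fun j => if j == i then h else 0); split.
        by move=> j; case: eqP => [->//|_]; exact: toric0.
      by rewrite sum_single.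
    + by move=> g tg; have [k hk] := (heq g).1 tg; exists k.
  by move: hs; lia.
Qed.
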